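(* Let $G$ be a finite abelian group and let $k \in \mathbb{N}$. Let $B$ be a zero-sum sequence over $G$ with $\max\mathsf{L}(B)=k$. If there exist a factorization $\zeta$ of $B$ with $|\zeta|=k$ and a minimal zero-sum sequence $U$ occurring at least $\delta(G)$ times as a factor in $\zeta$, then $\max \mathsf{L}(BU)=k+1$.
   Context: $G$ is written additively. A sequence over $G$ is an element of the free abelian monoid $\mathcal{F}(G)$ (finite unordered list with repetitions). A zero-sum sequence has terms summing to $0$; a minimal zero-sum sequence is a non-empty zero-sum sequence with no proper non-empty zero-sum subsequence; $\mathcal{A}(G)$ is the set of these. Factorizations are elements of the free abelian monoid $\mathsf{Z}(G)$ over $\mathcal{A}(G)$ (formal unordered products of minimal zero-sum sequences); $\pi$ evaluates the product; a factorization of $B$ is a $\zeta$ with $\pi(\zeta)=B$; $|\zeta|$ is the number of factors; $\mathsf{L}(B)$ is the set of lengths of factorizations of $B$. $\mathsf{d}(\zeta,\xi)=\max\{|\gcd(\zeta,\xi)^{-1}\zeta|,|\gcd(\zeta,\xi)^{-1}\xi|\}$. Distinct $k,\ell\in\mathsf{L}(B)$ are adjacent lengths if no element of $\mathsf{L}(B)$ lies strictly between them. $\delta(\zeta)$ is the smallest $m\in\mathbb{N}_0$ such that for every $k\in\mathbb{N}$ with $k$, $|\zeta|$ adjacent lengths of $\pi(\zeta)$ there exists a factorization $\xi$ of $\pi(\zeta)$ with $|\xi|=k$ and $\mathsf{d}(\xi,\zeta)\le m$; $\delta(G)=\sup\{\delta(\zeta):\zeta\in\mathsf{Z}(G)\}$.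 *)

(* Defs.v *)
From HB Require Import structures.
From mathcomp Require Import all_boot all_order all_algebra.
From mathcomp Require Import finmap multiset.

Set Implicit Arguments.
Unset Strict Implicit.
Unset Printing Implicit Defensive.

Import GRing.Theory.
Local Open Scope mset_scope.

Section ZeroSum.
Variable G : finZmodType.

(* A sequence over G is an element of the free abelian monoid F(G) = {mset G}. *)
Definition zero_sum (S : {mset G}) : Prop := (\sum_(g <- S) g)%R = 0%R.

Definition minimal_zero_sum (S : {mset G}) : Prop :=
  S != mset0 /\ zero_sum S /\
  (forall T : {mset G}, T `<=` S -> T != mset0 -> zero_sum T -> T = S).

Definition is_factorization_elt (z : {mset {mset G}}) : Prop :=
  forall U, U \in z -> minimal_zero_sum U.

Definition pi (z : {mset {mset G}}) : {mset G} := \big[msetD/mset0]_(U <- z) U.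

Definition factorization_of (z : {mset {mset G}}) (B : {mset G}) : Prop :=
  is_factorization_elt z /\ pi z = B.

Definition in_L (B : {mset G}) (k : nat) : Prop :=
  exists z, factorization_of z B /\ size z = k.

Definition maxL_eq (B : {mset G}) (k : nat) : Prop :=
  in_L B k /\ forall l, in_L B l -> l <= k.

Definition fdist (z x : {mset {mset G}}) : nat :=
  maxn (size (z `\` (z `&` x))) (size (x `\` (z `&` x))).

Definition adjacent_lengths (B : {mset G}) (k l : nat) : Prop :=
  k <> l /\ in_L B k /\ in_L B l /\
  ~ (exists m, in_L B m /\ minn k l < m < maxn k l).

Definition delta_prop (z : {mset {mset G}}) (m : nat) : Prop :=
  forall k, adjacent_lengths (pi z) k (size z) ->
    exists x, factorization_of x (pi z) /\ size x = k /\ fdist x z <= m.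

Definition delta_eq (z : {mset {mset G}}) (m : nat) : Prop :=
  delta_prop z m /\ forall m', delta_prop z m' -> m <= m'.

(* delta(G) <= n, where delta(G) = sup { delta(zeta) : zeta in Z(G) }
   (a supremum in N_0 \cup {oo}; delta(G) <= n iff every delta(zeta) <= n) *)
Definition deltaG_le (n : nat) : Prop :=
  forall z m, is_factorization_elt z -> delta_eq z m -> m <= n.

End ZeroSum.

(* Main.v *)
Require Import Defs.
From HB Require Import structures.
From mathcomp Require Import all_boot all_order all_algebra.
From mathcomp Require Import finmap multiset.
From Stdlib Require Import Classical.
Local Open Scope mset_scope.
Set Implicit Arguments.

Lemma perm_msetD (K : choiceType) (A B : {mset K}) :
  perm_eq (A `+` B) ((A : seq K) ++ (B : seq K)).
Proof.
rewrite /perm_eq; apply/allP => x _ /=.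
by rewrite count_cat !count_mem_mset msetE2.
Qed.

Lemma size_msetD (K : choiceType) (A B : {mset K}) :
  size (A `+` B) = size A + size B.
Proof. by rewrite (perm_size (perm_msetD A B)) size_cat. Qed.

Lemma size_msub (K : choiceType) (A B : {mset K}) :
  A `<=` B -> size A <= size B.
Proof. by move=> /msetBDKC <-; rewrite size_msetD leq_addr. Qed.

Lemma mult_le_size (K : choiceType) (A : {mset K}) a : A a <= size A.
Proof. by rewrite -count_mem_mset count_size. Qed.

Lemma piseqE (G : finZmodType) (s : seq {mset G}) a :
  (\big[msetD/mset0]_(U <- s) U) a = (\sum_(U <- s) U a)%N.
Proof.
elim: s => [|V s IH]; first by rewrite !big_nil mset0E.
by rewrite !big_cons msetE2 IH.
Qed.

Lemma piE (G : finZmodType) (z : {mset {mset G}}) a :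
  Defs.pi z a = (\sum_(U <- z) U a)%N.
Proof. exact: piseqE. Qed.

Lemma pi_add1 (G : finZmodType) (z : {mset {mset G}}) U :
  Defs.pi (z `+` [mset U]) = Defs.pi z `+` U.
Proof.
apply/msetP => a; rewrite msetE2 !piE (perm_big _ (perm_msetD _ _)).
by rewrite big_cat /= enum_msetn /= big_cons big_nil addn0.
Qed.

Lemma size_pi_seq (G : finZmodType) (s : seq {mset G}) :
  (forall U, U \in s -> U != mset0) ->
  size s <= size (\big[msetD/mset0]_(U <- s) U).
Proof.
elim: s => [|V s IH] H //=.
rewrite big_cons size_msetD.
have hV : 0 < size V.
  by rewrite lt0n size_mset_eq0; apply: H; rewrite inE eqxx.
have h : size s <= size (\big[msetD/mset0]_(U <- s) U).
  by apply: IH => U hU; apply: H; rewrite inE hU orbT.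
by rewrite -addn1 addnC; apply: leq_add.
Qed.

Lemma size_le_pi (G : finZmodType) (z : {mset {mset G}}) :
  is_factorization_elt z -> size z <= size (Defs.pi z).
Proof.
move=> Hz; apply: size_pi_seq => U hU.
by case: (Hz U hU).
Qed.

Lemma minP (P : nat -> Prop) n : P n ->
  exists m, P m /\ forall m', P m' -> m <= m'.
Proof.
elim: n {-2}n (leqnn n) => [|N IH] n hn Pn.
  exists n; split => // m' _; move: hn; rewrite leqn0 => /eqP->; done.
case: (classic (exists m, P m /\ m < n)) => [[m [Pm hm]]|hno].
  apply: (IH m) => //; by rewrite -ltnS (leq_trans hm hn).
exists n; split => // m' Pm'; case: (leqP n m') => // h.
by exfalso; apply: hno; exists m'.
Qed.

Lemma delta_exists (G : finZmodType) (z : {mset {mset G}}) :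
  exists m, delta_eq z m.
Proof.
have [m [H1 H2]] : exists m, delta_prop z m /\ forall m', delta_prop z m' -> m <= m'.
  apply: (@minP _ (size (Defs.pi z) + size z)) => k [_ [[x [[Hx Px] Sx]] _]].
  exists x; split; first by split.
  split => //.
  rewrite /fdist geq_max; apply/andP; split.
    apply: leq_trans; first exact: size_msub (msubsetDl _ _).
    apply: leq_trans; first exact: (size_le_pi Hx).
    rewrite Px; exact: leq_addr.
  apply: leq_trans; first exact: size_msub (msubsetDl _ _).
  exact: leq_addl.
by exists m; split.
Qed.

Unset Implicit Arguments.
Theorem lemma6p3 (G : finZmodType) (k : nat) (B : {mset G}) :
  zero_sum B -> maxL_eq B k ->
  forall (zeta : {mset {mset G}}) (U : {mset G}),
    factorization_of zeta B -> size zeta = k ->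
    minimal_zero_sum U -> deltaG_le G (zeta U) ->
    maxL_eq (B `+` U) k.+1.
Proof.
move=> _ [_ HmaxB] zeta U [Hzeta Pzeta] Szeta HU Hdelta.
set z := zeta `+` [mset U].
have Hz : is_factorization_elt z.
  move=> V; rewrite in_msetD => /orP [/Hzeta //|]; by rewrite in_mset1 => /eqP ->.
have Pz : Defs.pi z = B `+` U by rewrite /z pi_add1 Pzeta.
have Sz : size z = k.+1 by rewrite /z size_msetD enum_msetn /= Szeta addn1.
have Lz : in_L (B `+` U) k.+1 by exists z; split => //; split.
split => // l Hl; case: (leqP l k.+1) => // hlt; exfalso.
have [l0 [[Hl0 hl0] Hmin]] := @minP (fun l => in_L (B `+` U) l /\ k.+1 < l) l (conj Hl hlt).
have Hadj : adjacent_lengths (Defs.pi z) l0 (size z).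
  rewrite Pz Sz; split; first by move=> e; rewrite e ltnn in hl0.
  split => //; split => //; move=> [m [Hm hm]].
  move: hm; rewrite (minn_idPr (ltnW hl0)) (maxn_idPl (ltnW hl0)) => /andP [h1 h2].
  by have := Hmin m (conj Hm h1); rewrite leqNgt h2.
have [m Hmeq] := delta_exists z.
have hm : m <= zeta U := Hdelta z m Hz Hmeq.
have [xi [[Hxi Pxi] [Sxi Dxi]]] := proj1 Hmeq l0 Hadj.
have UinXi : U \in xi.
  case: (boolP (U \in xi)) => // hn; exfalso.
  have e : (z `\` (xi `&` z)) U = (zeta U).+1.
    by rewrite /z !msetE2 (mset_eq0P hn) min0n subn0 msetnE eqxx addn1.
  have h1 := mult_le_size (z `\` (xi `&` z)) U.
  rewrite e in h1.
  have h2 : size (z `\` (xi `&` z)) <= fdist xi z by rewrite /fdist leq_maxr.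
  have := leq_trans h1 (leq_trans h2 (leq_trans Dxi hm)).
  by rewrite ltnn.
set xi' := xi `\ U.
have Exi : xi = xi' `+` [mset U] by rewrite msetDC /xi' msetB1K.
have Hxi' : factorization_of xi' B.
  split.
    move=> V hV; apply: Hxi; move: hV; rewrite /xi' in_msetB1 => /andP [_ ->] //.
  have := Pxi; rewrite Pz {1}Exi pi_add1 => /(congr1 (fun X => X `\` U)).
  by rewrite !msetDKBC.
have := HmaxB (size xi') (ex_intro _ xi' (conj Hxi' erefl)).
have : size xi = (size xi').+1 by rewrite {1}Exi size_msetD enum_msetn /= addn1.
rewrite Sxi => e; move: hl0; rewrite e ltnS => h1 h2.
by have := leq_ltn_trans h2 h1; rewrite ltnn.
Qed.
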